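(* For each $t\in\{0,1,\dots,T-1\}$, $k\in\mathbb{N}_0$ and $i\in\{1,\dots,N\}$, there exists an integer control limit $\delta_i^{(k,t)}$ with $0<\delta_i^{(k,t)}\le\xi_i$ such that, for every $x\in\mathbb{N}_0$, the action $a=1$ (replacement) is optimal in state $(x,k)$ at epoch $t$ if and only if $x\ge\delta_i^{(k,t)}$.
   Context: Fix integers $N\ge1$, $T\ge1$, reals $\alpha_0,\beta_0>0$, and for each $i\in\{1,\dots,N\}$ an integer failure threshold $\xi_i\ge1$ and costs $0<c_p^i<c_u^i$. $\mathbb{N}_0=\{0,1,2,\dots\}$. For real $r>0$ and $p\in(0,1)$, $NB(r,p)$ is the distribution on $\mathbb{N}_0$ with $P(n)=\frac{\Gamma(n+r)}{\Gamma(r)n!}p^r(1-p)^n$; $NB(0,p)$ is the point mass at $0$. For $t\in\{0,\dots,T\}$ let $p_t=\frac{\beta_0+Nt}{\beta_0+Nt+1}$. Let $\mathbb{I}_i(x)=1$ if $x\ge\xi_i$, else $0$; $\mathcal{A}_i(x)=\{0,1\}$ if $x<\xi_i$ and $\{1\}$ if $x\ge\xi_i$ ($a=1$: replacement, $a=0$: no action); $C_i(x,a)=a(1-\mathbb{I}_i(x))c_p^i+\mathbb{I}_i(x)c_u^i$. Define $\tilde V^{N,i}_T(x,k)=\mathbb{I}_i(x)c_u^i$ and for $t=T-1,\dots,0$: $\tilde V^{N,i}_t(x,k)=\min_{a\in\mathcal{A}_i(x)}\{C_i(x,a)+\mathbb{E}[\tilde V^{N,i}_{t+1}(x(1-a)+Z,\;k+Z+K)]\}$,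 where $Z\sim NB(\alpha_0+k,p_t)$ and $K\sim NB((N-1)(\alpha_0+k),p_t)$ are independent. An action $a\in\mathcal{A}_i(x)$ is optimal in state $(x,k)$ at epoch $t$ if it attains this minimum. *)

(* Defs.v *)
From Stdlib Require Import Reals Lra Lia.
From Coquelicot Require Import Coquelicot.
Open Scope R_scope.

(* rising factorial  r (r+1) ... (r+n-1) = Gamma(n+r)/Gamma(r) *)
Fixpoint rising (r : R) (n : nat) : R :=
  match n with
  | O => 1
  | S m => rising r m * (r + INR m)
  end.

(* Negative binomial pmf NB(r,p):
   P(n) = Gamma(n+r)/(Gamma(r) n!) p^r (1-p)^n, written via the rising
   factorial; for r = 0 this is the point mass at 0 (rising 0 n = 0 for n>=1,
   Rpower p 0 = 1). *)
Definition nb_pmf (r p : R) (n : nat) : R :=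
  rising r n / INR (Factorial.fact n) * Rpower p r * (1 - p) ^ n.

Definition p_t (beta0 : R) (N t : nat) : R :=
  (beta0 + INR N * INR t) / (beta0 + INR N * INR t + 1).

Definition Ind (xi : nat) (x : nat) : R := if (xi <=? x)%nat then 1 else 0.

Definition Cost (xi : nat) (cp cu : R) (x a : nat) : R :=
  INR a * (1 - Ind xi x) * cp + Ind xi x * cu.

(* E[ f(Z,K) ] with Z ~ NB(alpha0+k, p), K ~ NB((N-1)(alpha0+k), p) independent *)
Definition expect2 (N : nat) (alpha0 p : R) (k : nat) (f : nat -> nat -> R) : R :=
  Series (fun z => Series (fun m =>
    nb_pmf (alpha0 + INR k) p z *
    nb_pmf (INR (N - 1) * (alpha0 + INR k)) p m * f z m)).

(* W s = tilde V_{T-s}, by backward recursion on s = T - t. *)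
Fixpoint W (N T : nat) (alpha0 beta0 : R) (xi : nat) (cp cu : R)
    (s : nat) (x k : nat) : R :=
  match s with
  | O => Ind xi x * cu
  | S s' =>
      let t := (T - S s')%nat in
      let Q (a : nat) : R :=
        Cost xi cp cu x a +
        expect2 N alpha0 (p_t beta0 N t) k
          (fun z m => W N T alpha0 beta0 xi cp cu s'
                        (x * (1 - a) + z)%nat (k + z + m)%nat) in
      if (xi <=? x)%nat then Q 1%nat else Rmin (Q 0%nat) (Q 1%nat)
  end.

Definition Vt (N T : nat) (alpha0 beta0 : R) (xi : nat) (cp cu : R)
    (t x k : nat) : R :=
  W N T alpha0 beta0 xi cp cu (T - t) x k.

Definition Qval (N T : nat) (alpha0 beta0 : R) (xi : nat) (cp cu : R)
    (t x k a : nat) : R :=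
  Cost xi cp cu x a +
  expect2 N alpha0 (p_t beta0 N t) k
    (fun z m => Vt N T alpha0 beta0 xi cp cu (S t)
                  (x * (1 - a) + z)%nat (k + z + m)%nat).

Definition admissible (xi x a : nat) : Prop :=
  if (xi <=? x)%nat then a = 1%nat else (a = 0%nat \/ a = 1%nat).

Definition optimal (N T : nat) (alpha0 beta0 : R) (xi : nat) (cp cu : R)
    (t x k a : nat) : Prop :=
  admissible xi x a /\
  Qval N T alpha0 beta0 xi cp cu t x k a = Vt N T alpha0 beta0 xi cp cu t x k.

(* Main.v *)
Require Import Defs.
From Stdlib Require Import Reals Lra Lia.
From Coquelicot Require Import Coquelicot.
Open Scope R_scope.

Lemma series_bound (a : nat -> R) (C : R) :
  (forall n, 0 <= a n) -> (forall N, sum_f_R0 a N <= C) ->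
  ex_series a /\ Series a <= C.
Proof.
  intros H0 HC.
  assert (Hi : forall n, sum_n a n <= sum_n a (S n)).
  { intro n. rewrite sum_Sn. unfold plus; simpl. specialize (H0 (S n)). lra. }
  assert (Hb : forall n, sum_n a n <= C).
  { intro n. rewrite sum_n_Reals. apply HC. }
  destruct (ex_finite_lim_seq_incr _ _ Hi Hb) as [l Hl].
  assert (Hs : is_series a l) by exact Hl.
  split. exists l; exact Hs.
  rewrite (is_series_unique _ _ Hs).
  pose proof (is_lim_seq_le _ _ _ _ Hb Hl (is_lim_seq_const C)) as H. simpl in H. exact H.
Qed.

Lemma rising_nonneg r n : 0 <= r -> 0 <= rising r n.
Proof. intro. induction n; simpl. lra. pose proof (pos_INR n). apply Rmult_le_pos; lra. Qed.

Lemma rising_mono r r' n : 0 <= r -> r <= r' -> rising r n <= rising r' n.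
Proof.
  intros. induction n; simpl. lra. pose proof (pos_INR n).
  apply Rmult_le_compat; try lra. apply rising_nonneg; lra.
Qed.

Lemma rising_shift r n : rising r (S n) = r * rising (r+1) n.
Proof.
  induction n. simpl. lra.
  change (rising r (S (S n))) with (rising r (S n) * (r + INR (S n))).
  rewrite IHn, S_INR. simpl. ring.
Qed.

Definition dd (r : R) (n : nat) : R := rising r n / INR (Factorial.fact n).

Lemma fact_pos n : 0 < INR (Factorial.fact n).
Proof. apply lt_0_INR. apply Factorial.lt_O_fact. Qed.

Lemma dd_nonneg r n : 0 <= r -> 0 <= dd r n.
Proof. intro. unfold dd. apply Rdiv_le_0_compat. apply rising_nonneg; auto. apply fact_pos. Qed.

Lemma pascal r n : dd (r+1) (S n) = dd (r+1) n + dd r (S n).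
Proof.
  unfold dd. rewrite (rising_shift r n).
  change (rising (r+1) (S n)) with (rising (r+1) n * (r + 1 + INR n)).
  change (Factorial.fact (S n)) with (S n * Factorial.fact n)%nat.
  rewrite mult_INR, S_INR. pose proof (fact_pos n). pose proof (pos_INR n).
  field. lra.
Qed.

Lemma dd_zero n : dd 0 n = if (n =? 0)%nat then 1 else 0.
Proof.
  unfold dd. destruct n. simpl. lra.
  rewrite rising_shift. simpl. lra.
Qed.

Section Q.
Variable q : R.
Hypothesis hq : 0 <= q < 1.

Definition Ssum r N := sum_f_R0 (fun n => dd r n * q ^ n) N.

Lemma Ssum_rec r N : Ssum (r+1) (S N) = q * Ssum (r+1) N + Ssum r (S N).
Proof.
  unfold Ssum. induction N.
  - simpl. unfold dd; simpl. lra.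
  - change (sum_f_R0 (fun n => dd (r + 1) n * q ^ n) (S (S N))) with
      (sum_f_R0 (fun n => dd (r + 1) n * q ^ n) (S N) + dd (r+1) (S (S N)) * q ^ (S (S N))).
    rewrite IHN at 1. rewrite pascal.
    change (sum_f_R0 (fun n => dd r n * q ^ n) (S (S N))) with
      (sum_f_R0 (fun n => dd r n * q ^ n) (S N) + dd r (S (S N)) * q ^ (S (S N))).
    change (sum_f_R0 (fun n => dd (r + 1) n * q ^ n) (S N)) with
      (sum_f_R0 (fun n => dd (r + 1) n * q ^ n) N + dd (r+1) (S N) * q ^ (S N)).
    simpl. ring.
Qed.

Lemma Ssum_int m N : Ssum (INR m) N <= / (1 - q) ^ m.
Proof.
  revert N. induction m; intro N.
  - simpl. unfold Ssum. induction N. simpl. unfold dd; simpl. lra.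
    simpl. rewrite dd_zero. simpl. simpl in IHN. lra.
  - rewrite S_INR.
    assert (Hq1 : 0 < 1 - q) by lra.
    assert (Hpm : 0 < (1-q)^m) by (apply pow_lt; lra).
    assert (key : forall N, Ssum (INR m + 1) N * (1 - q) <= Ssum (INR m) N).
    { intro M. destruct M.
      - unfold Ssum; simpl. unfold dd; simpl. lra.
      - rewrite Ssum_rec.
        assert (Ssum (INR m + 1) M <= Ssum (INR m + 1) (S M)).
        { unfold Ssum. simpl. pose proof (dd_nonneg (INR m + 1) (S M)).
          assert (0 <= q * q ^ M) by (apply Rmult_le_pos; [lra| apply pow_le; lra]).
          pose proof (pos_INR m).
          assert (0 <= dd (INR m + 1) (S M) * (q * q ^ M)) by (apply Rmult_le_pos; auto; apply H; lra).
          lra. }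
        assert (q * Ssum (INR m + 1) M <= q * Ssum (INR m + 1) (S M)) by (apply Rmult_le_compat_l; lra).
        rewrite Ssum_rec in H0. nra. }
    specialize (key N). pose proof (IHm N) as IHN.
    simpl. rewrite Rinv_mult.
    assert (Ssum (INR m + 1) N <= Ssum (INR m) N / (1 - q)).
    { apply Rmult_le_reg_r with (1 - q). lra. unfold Rdiv. rewrite Rmult_assoc, Rinv_l; lra. }
    assert (Ssum (INR m) N / (1 - q) <= / (1 - q) ^ m / (1-q)).
    { unfold Rdiv. apply Rmult_le_compat_r. left; apply Rinv_0_lt_compat; lra. auto. }
    unfold Rdiv in *. lra.
Qed.
End Q.

From Stdlib Require Import ZArith.

Lemma nat_above r : 0 <= r -> exists m : nat, r <= INR m <= r + 1.
Proof.
  intro Hr. destruct (archimed r) as [H1 H2].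
  assert (Hz : (0 <= up r)%Z). { apply le_IZR. lra. }
  exists (Z.to_nat (up r)). rewrite INR_IZR_INZ, Z2Nat.id by exact Hz. lra.
Qed.

Lemma nb_nonneg r p n : 0 <= r -> 0 < p < 1 -> 0 <= nb_pmf r p n.
Proof.
  intros. unfold nb_pmf. apply Rmult_le_pos. apply Rmult_le_pos.
  apply (dd_nonneg r n H). unfold Rpower. left; apply exp_pos.
  apply pow_le. lra.
Qed.

Lemma sum_scal_l (c : R) (a : nat -> R) N :
  sum_f_R0 (fun n => c * a n) N = c * sum_f_R0 a N.
Proof. induction N; simpl. ring. rewrite IHN. ring. Qed.

Lemma nb_partial r p : 0 <= r -> 0 < p < 1 ->
  forall N, sum_f_R0 (nb_pmf r p) N <= / p.
Proof.
  intros Hr Hp N. destruct (nat_above r Hr) as [m Hm].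
  assert (Hq : 0 <= 1 - p < 1) by lra.
  assert (E : sum_f_R0 (nb_pmf r p) N = Rpower p r * Ssum (1 - p) r N).
  { unfold Ssum. rewrite <- sum_scal_l. apply sum_eq. intros. unfold nb_pmf, dd. ring. }
  rewrite E.
  assert (H1 : Ssum (1-p) r N <= Ssum (1-p) (INR m) N).
  { unfold Ssum. apply sum_Rle. intros. apply Rmult_le_compat_r. apply pow_le; lra.
    unfold dd. unfold Rdiv. apply Rmult_le_compat_r. left; apply Rinv_0_lt_compat, fact_pos.
    apply rising_mono; lra. }
  pose proof (Ssum_int (1-p) Hq m N) as H2.
  replace (1 - (1 - p)) with p in H2 by ring.
  assert (HR : 0 < Rpower p r) by (unfold Rpower; apply exp_pos).
  assert (H3 : Rpower p r * / p ^ m <= / p).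
  { rewrite <- (Rpower_pow m p) by lra. unfold Rpower.
    rewrite <- exp_Ropp. rewrite <- exp_plus.
    replace (/ p) with (exp (- ln p)) by (rewrite exp_Ropp, exp_ln; lra).
    assert (ln p < 0) by (rewrite <- ln_1; apply ln_increasing; lra).
    assert (r * ln p + - (INR m * ln p) <= - ln p) by nra.
    destruct H0. left; apply exp_increasing; auto. rewrite H0; lra. }
  assert (Rpower p r * Ssum (1 - p) r N <= Rpower p r * / p ^ m).
  { apply Rmult_le_compat_l. lra. lra. }
  lra.
Qed.

Lemma ex_series_Rscal (c : R) (a : nat -> R) : ex_series a -> ex_series (fun n => c * a n).
Proof. intro H. exact (ex_series_scal_l c a H). Qed.

Lemma ex_series_dom (a c : nat -> R) : (forall n, 0 <= a n <= c n) -> ex_series c -> ex_series a.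
Proof.
  intros H Hc. apply (ex_series_le a c); auto. intro n. specialize (H n).
  change (norm (a n)) with (Rabs (a n)). rewrite Rabs_pos_eq; lra.
Qed.

Lemma ser_sandwich (a b c : nat -> R) : (forall n, 0 <= a n <= b n /\ b n <= c n) -> ex_series c ->
  0 <= Series a /\ Series a <= Series b /\ Series b <= Series c.
Proof.
  intros H Hc.
  assert (Hb : ex_series b) by (apply (ex_series_dom b c); [intro n; specialize (H n); lra|auto]).
  assert (Ha : ex_series a) by (apply (ex_series_dom a b); [intro n; specialize (H n); lra|auto]).
  split. assert (Z0 : Series (fun n => 0 * a n) = 0) by (rewrite Series_scal_l; ring). rewrite <- Z0. apply Series_le; auto. intro n; specialize (H n); lra.
  split; apply Series_le; auto; intro n; specialize (H n); lra.
Qed.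

Lemma expect2_mono N alpha0 p k (f g : nat -> nat -> R) M :
  0 < alpha0 -> 0 < p < 1 -> 0 <= M -> (forall z m, 0 <= f z m /\ f z m <= g z m /\ g z m <= M) ->
  0 <= expect2 N alpha0 p k f /\ expect2 N alpha0 p k f <= expect2 N alpha0 p k g /\
  expect2 N alpha0 p k g <= M * / p * / p.
Proof.
  intros Ha Hp HM Hfg. unfold expect2.
  set (r1 := alpha0 + INR k). set (r2 := INR (N-1) * r1).
  assert (Hr1 : 0 <= r1) by (unfold r1; pose proof (pos_INR k); lra).
  assert (Hr2 : 0 <= r2) by (unfold r2; apply Rmult_le_pos; [apply pos_INR|auto]).
  destruct (series_bound (nb_pmf r1 p) (/p) (fun n => nb_nonneg r1 p n Hr1 Hp) (nb_partial r1 p Hr1 Hp)) as [EA SA].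
  destruct (series_bound (nb_pmf r2 p) (/p) (fun n => nb_nonneg r2 p n Hr2 Hp) (nb_partial r2 p Hr2 Hp)) as [EB SB].
  assert (Inner : forall z,
    0 <= Series (fun m => nb_pmf r1 p z * nb_pmf r2 p m * f z m) /\
    Series (fun m => nb_pmf r1 p z * nb_pmf r2 p m * f z m) <=
    Series (fun m => nb_pmf r1 p z * nb_pmf r2 p m * g z m) /\
    Series (fun m => nb_pmf r1 p z * nb_pmf r2 p m * g z m) <= M * / p * nb_pmf r1 p z).
  { intro z.
    pose proof (nb_nonneg r1 p z Hr1 Hp) as Az.
    destruct (ser_sandwich (fun m => nb_pmf r1 p z * nb_pmf r2 p m * f z m)
                (fun m => nb_pmf r1 p z * nb_pmf r2 p m * g z m)
                (fun m => (nb_pmf r1 p z * M) * nb_pmf r2 p m)) as (H1 & H2 & H3).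
    - intro m. pose proof (nb_nonneg r2 p m Hr2 Hp) as Bm. specialize (Hfg z m).
      assert (0 <= nb_pmf r1 p z * nb_pmf r2 p m) by (apply Rmult_le_pos; auto).
      split. split. apply Rmult_le_pos; lra. apply Rmult_le_compat_l; lra.
      replace (nb_pmf r1 p z * M * nb_pmf r2 p m) with (nb_pmf r1 p z * nb_pmf r2 p m * M) by ring.
      apply Rmult_le_compat_l; lra.
    - apply ex_series_Rscal; auto.
    - split; auto. split; auto. rewrite Series_scal_l in H3.
      assert (nb_pmf r1 p z * M * Series (nb_pmf r2 p) <= nb_pmf r1 p z * M * / p).
      { apply Rmult_le_compat_l; auto. apply Rmult_le_pos; auto. }
      lra. }
  destruct (ser_sandwich (fun z => Series (fun m => nb_pmf r1 p z * nb_pmf r2 p m * f z m))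
              (fun z => Series (fun m => nb_pmf r1 p z * nb_pmf r2 p m * g z m))
              (fun z => (M * / p) * nb_pmf r1 p z)) as (H1 & H2 & H3).
  - intro z. specialize (Inner z). lra.
  - apply ex_series_Rscal; auto.
  - split; auto. split; auto. rewrite Series_scal_l in H3.
    assert (M * / p * Series (nb_pmf r1 p) <= M * / p * / p).
    { apply Rmult_le_compat_l; auto. apply Rmult_le_pos; auto. left; apply Rinv_0_lt_compat; lra. }
    lra.
Qed.

Lemma expect2_ext N alpha0 p k (f g : nat -> nat -> R) :
  (forall z m, f z m = g z m) -> expect2 N alpha0 p k f = expect2 N alpha0 p k g.
Proof.
  intro H. unfold expect2. apply Series_ext. intro z. apply Series_ext. intro m. rewrite H. auto.
Qed.

Lemma p_t_range beta0 N t : 0 < beta0 -> 0 < p_t beta0 N t < 1.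
Proof.
  intro Hb. unfold p_t. assert (0 <= INR N * INR t) by (apply Rmult_le_pos; apply pos_INR).
  split. apply Rdiv_lt_0_compat; lra.
  apply Rmult_lt_reg_r with (beta0 + INR N * INR t + 1). lra.
  unfold Rdiv. rewrite Rmult_assoc, Rinv_l by lra. lra.
Qed.

Lemma threshold (P : nat -> Prop) n :
  (forall x y, (x <= y)%nat -> (y < n)%nat -> P x -> P y) ->
  exists d, (d <= n)%nat /\ forall x, (x < n)%nat -> (P x <-> (d <= x)%nat).
Proof.
  induction n; intro Hup.
  - exists 0%nat. split. lia. intros; lia.
  - destruct IHn as [d [Hd Hx]].
    { intros x y Hxy Hy. apply Hup; lia. }
    destruct (Nat.eq_dec d n) as [Heq|Hne].
    + destruct (Classical_Prop.classic (P n)) as [Pn|nPn].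
      * exists n. split. lia. intros x Hxn. destruct (Nat.eq_dec x n). subst; split; auto; lia.
        rewrite Hx by lia. lia.
      * exists (S n). split. lia. intros x Hxn. destruct (Nat.eq_dec x n). subst; split; try tauto; lia.
        rewrite Hx by lia. lia.
    + exists d. split. lia. intros x Hxn. destruct (Nat.eq_dec x n).
      * subst. split; intro; try lia. apply (Hup d n). lia. lia. apply Hx; lia.
      * apply Hx; lia.
Qed.

Section Main.
Variables (N T : nat) (alpha0 beta0 : R) (xi : nat) (cp cu : R).
Hypotheses (Ha : 0 < alpha0) (Hb : 0 < beta0) (Hxi : (1 <= xi)%nat) (Hcp : 0 < cp) (Hcc : cp < cu).

Definition WW := W N T alpha0 beta0 xi cp cu.
Definition pp s := p_t beta0 N (T - S s).
Definition GG s k := expect2 N alpha0 (pp s) k (fun z m => WW s z (k + z + m)%nat).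
Definition EE s x k := expect2 N alpha0 (pp s) k (fun z m => WW s (x + z) (k + z + m)%nat).
Definition Qa s x k a := Cost xi cp cu x a +
  expect2 N alpha0 (pp s) k (fun z m => WW s (x * (1 - a) + z) (k + z + m)%nat).

Lemma W_S s x k : WW (S s) x k = if (xi <=? x)%nat then Qa s x k 1 else Rmin (Qa s x k 0) (Qa s x k 1).
Proof. reflexivity. Qed.

Lemma Qa1 s x k : Qa s x k 1 = (if (xi <=? x)%nat then cu else cp) + GG s k.
Proof.
  unfold Qa, GG. f_equal. unfold Cost, Ind. destruct (xi <=? x)%nat; simpl; ring.
  apply expect2_ext. intros. rewrite Nat.sub_diag, Nat.mul_0_r. reflexivity.
Qed.

Lemma Qa0 s x k : (x < xi)%nat -> Qa s x k 0 = EE s x k.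
Proof.
  intro H. unfold Qa, EE. unfold Cost, Ind.
  replace (xi <=? x)%nat with false by (symmetry; apply Nat.leb_gt; lia).
  simpl (INR 0). rewrite (expect2_ext _ _ _ _ _ (fun z m => WW s (x + z) (k + z + m)%nat)).
  ring. intros. rewrite Nat.sub_0_r, Nat.mul_1_r. reflexivity.
Qed.

Lemma W_bound s : exists M, 0 <= M /\ forall x k, 0 <= WW s x k <= M.
Proof.
  induction s.
  - exists cu. split. lra. intros. unfold WW; simpl. unfold Ind. destruct (xi <=? x)%nat; lra.
  - destruct IHs as [M [HM HW]].
    pose proof (p_t_range beta0 N (T - S s) Hb) as Hp.
    exists (cu + M * / pp s * / pp s). split.
    { assert (0 <= M * / pp s * / pp s). unfold pp. apply Rmult_le_pos. apply Rmult_le_pos. auto.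
      left; apply Rinv_0_lt_compat; lra. left; apply Rinv_0_lt_compat; lra. lra. }
    assert (HG : forall k, 0 <= GG s k <= M * / pp s * / pp s).
    { intro k. destruct (expect2_mono N alpha0 (pp s) k (fun z m => WW s z (k + z + m)%nat)
        (fun z m => WW s z (k + z + m)%nat) M Ha Hp HM) as (H1 & H2 & H3).
      intros; specialize (HW z (k+z+m)%nat); lra. unfold GG; lra. }
    assert (HE : forall x k, 0 <= EE s x k <= M * / pp s * / pp s).
    { intros x k. destruct (expect2_mono N alpha0 (pp s) k (fun z m => WW s (x + z) (k + z + m)%nat)
        (fun z m => WW s (x + z) (k + z + m)%nat) M Ha Hp HM) as (H1 & H2 & H3).
      intros; specialize (HW (x+z)%nat (k+z+m)%nat); lra. unfold EE; lra. }
    intros x k. rewrite W_S, Qa1. destruct (xi <=? x)%nat eqn:Ex.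
    + specialize (HG k). lra.
    + rewrite Qa0 by (apply Nat.leb_gt; auto). specialize (HG k). specialize (HE x k).
      unfold Rmin. destruct (Rle_dec _ _); lra.
Qed.

Lemma W_mono s : forall x k, WW s x k <= WW s (S x) k.
Proof.
  induction s; intros x k.
  - unfold WW; simpl. unfold Ind. destruct (xi <=? x)%nat eqn:E1; destruct (xi <=? S x)%nat eqn:E2;
      try lra. apply Nat.leb_le in E1. apply Nat.leb_gt in E2. lia.
  - destruct (W_bound s) as [M [HM HW]].
    pose proof (p_t_range beta0 N (T - S s) Hb) as Hp.
    assert (HE : EE s x k <= EE s (S x) k).
    { destruct (expect2_mono N alpha0 (pp s) k (fun z m => WW s (x + z) (k + z + m)%nat)
        (fun z m => WW s (S x + z) (k + z + m)%nat) M Ha Hp HM) as (H1 & H2 & H3).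
      intros. pose proof (HW (S x + z)%nat (k+z+m)%nat). pose proof (HW (x+z)%nat (k+z+m)%nat).
      pose proof (IHs (x + z)%nat (k+z+m)%nat). simpl in *. lra. unfold EE; lra. }
    rewrite !W_S, !Qa1. destruct (xi <=? x)%nat eqn:E1; destruct (xi <=? S x)%nat eqn:E2.
    + lra.
    + apply Nat.leb_le in E1. apply Nat.leb_gt in E2. lia.
    + rewrite Qa0 by (apply Nat.leb_gt; auto). unfold Rmin. destruct (Rle_dec _ _); lra.
    + rewrite !Qa0 by (apply Nat.leb_gt; auto). unfold Rmin. destruct (Rle_dec _ _); destruct (Rle_dec _ _); lra.
Qed.

Lemma E_mono s k : forall x y, (x <= y)%nat -> EE s x k <= EE s y k.
Proof.
  destruct (W_bound s) as [M [HM HW]].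
  pose proof (p_t_range beta0 N (T - S s) Hb) as Hp.
  assert (H1 : forall x, EE s x k <= EE s (S x) k).
  { intro x. destruct (expect2_mono N alpha0 (pp s) k (fun z m => WW s (x + z) (k + z + m)%nat)
        (fun z m => WW s (S x + z) (k + z + m)%nat) M Ha Hp HM) as (H1 & H2 & H3).
      intros. pose proof (HW (S x + z)%nat (k+z+m)%nat). pose proof (HW (x+z)%nat (k+z+m)%nat).
      pose proof (W_mono s (x + z)%nat (k+z+m)%nat). simpl in *. lra. unfold EE; lra. }
  intros x y Hxy. induction Hxy. lra. specialize (H1 m). lra.
Qed.

End Main.

Theorem proposition2 (N T : nat) (alpha0 beta0 : R)
    (xi : nat -> nat) (cp cu : nat -> R) :
  (1 <= N)%nat -> (1 <= T)%nat -> 0 < alpha0 -> 0 < beta0 ->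
  (forall i, (1 <= i <= N)%nat -> (1 <= xi i)%nat /\ 0 < cp i < cu i) ->
  forall (t k i : nat), (t < T)%nat -> (1 <= i <= N)%nat ->
  exists delta : nat, (0 < delta <= xi i)%nat /\
    forall x : nat,
      optimal N T alpha0 beta0 (xi i) (cp i) (cu i) t x k 1%nat <-> (delta <= x)%nat.
Proof.
  intros HN HT Ha Hb Hi t k i Ht Hii.
  destruct (Hi i Hii) as [Hxi [Hcp Hcc]].
  set (s := (T - S t)%nat).
  assert (HQ : forall x a, Qval N T alpha0 beta0 (xi i) (cp i) (cu i) t x k a =
                 Qa N T alpha0 beta0 (xi i) (cp i) (cu i) s x k a).
  { intros. unfold Qa, Qval, pp, s. replace (T - S (T - S t))%nat with t by lia. reflexivity. }
  assert (HV : forall x, Vt N T alpha0 beta0 (xi i) (cp i) (cu i) t x k =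
                 WW N T alpha0 beta0 (xi i) (cp i) (cu i) (S s) x k).
  { intros. unfold Vt, WW, s. replace (T - t)%nat with (S (T - S t)) by lia. reflexivity. }
  set (P := fun x => cp i + GG N T alpha0 beta0 (xi i) (cp i) (cu i) s k <=
                     EE N T alpha0 beta0 (xi i) (cp i) (cu i) s x k).
  destruct (threshold P (xi i)) as [d [Hd Hx]].
  { intros x y Hxy Hy HPx. unfold P in *.
    pose proof (E_mono N T alpha0 beta0 (xi i) (cp i) (cu i) Ha Hb Hxi Hcp Hcc s k x y Hxy). lra. }
  assert (nP0 : ~ P 0%nat).
  { unfold P. unfold EE, GG. simpl. lra. }
  exists d. split.
  { split; auto. destruct d. exfalso. apply nP0. apply Hx; lia. lia. }
  intro x. unfold optimal. rewrite HQ, HV, W_S, Qa1.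
  unfold admissible.
  destruct (xi i <=? x)%nat eqn:E.
  - apply Nat.leb_le in E. split; intros; auto. lia.
  - apply Nat.leb_gt in E. rewrite Qa0 by auto. rewrite <- (Hx x E). unfold P.
    unfold Rmin. destruct (Rle_dec _ _).
    + split. intros [_ H]. lra. intros. split; auto. lra.
    + split; intros; [lra| split; auto].
Qed.
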